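(* Let $q(y,z|x)$ be a discrete memoryless broadcast channel with finite alphabets. Define the Marton sum-rate $$R_{\mathrm{sum}}=\sup_{p(u,v,w,x)}\Big[\min\{I(W;Y),I(W;Z)\}+I(U;Y|W)+I(V;Z|W)-I(U;V|W)\Big],$$ and for $\lambda\in[0,1]$ $$T_\lambda=\sup_{p(u,v,w,x)}\Big[\lambda I(W;Y)+(1-\lambda)I(W;Z)+I(U;Y|W)+I(V;Z|W)-I(U;V|W)\Big],$$ where both suprema range over all finite-alphabet random variables $(U,V,W,X)$ with $(U,V,W,X,Y,Z)\sim p(u,v,w,x)q(y,z|x)$. Then $R_{\mathrm{sum}}=\min_{\lambda\in[0,1]}T_\lambda$.
   Context: A two-receiver discrete memoryless broadcast channel has finite input alphabet $\mathcal X$, finite output alphabets $\mathcal Y,\mathcal Z$ and transition law $q(y,z|x)$. Mutual informations are computed under the stated joint distribution. *)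

(* Defs.v *)
From HB Require Import structures.
From mathcomp Require Import all_boot all_order all_algebra.
From mathcomp Require Import classical_sets reals ereal exp.
Set Implicit Arguments. Unset Strict Implicit. Unset Printing Implicit Defensive.
Import Order.TTheory GRing.Theory Num.Theory.
Local Open Scope ring_scope.

Section Info.
Variable R : realType.

Definition is_pmf (T : finType) (p : T -> R) : Prop :=
  (forall t, 0 <= p t) /\ \sum_(t : T) p t = 1.

Definition is_bc_channel (X Y Z : finType) (q : X -> Y -> Z -> R) : Prop :=
  (forall x y z, 0 <= q x y z) /\ (forall x, \sum_(y : Y) \sum_(z : Z) q x y z = 1).

Definition marg (S A : finType) (P : S -> R) (f : S -> A) (a : A) : R :=
  \sum_(s : S | f s == a) P s.

(* conditional mutual information I(A;B|C) (natural log; 0 log 0 = 0 since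
   the summand vanishes when p(a,b,c) = 0) *)
Definition cmi (S A B C : finType) (P : S -> R)
    (fa : S -> A) (fb : S -> B) (fc : S -> C) : R :=
  \sum_(t : A * B * C)
    let pabc := marg P (fun s => (fa s, fb s, fc s)) t in
    let pc := marg P fc t.2 in
    let pac := marg P (fun s => (fa s, fc s)) (t.1.1, t.2) in
    let pbc := marg P (fun s => (fb s, fc s)) (t.1.2, t.2) in
    pabc * ln (pabc * pc / (pac * pbc)).

Definition mi (S A B : finType) (P : S -> R) (fa : S -> A) (fb : S -> B) : R :=
  cmi P fa fb (fun _ => tt).

Variables (X Y Z : finType) (q : X -> Y -> Z -> R).

(* sample space (((u,v),w),x),(y,z)) with law p(u,v,w,x) q(y,z|x) *)
Definition joint (U V W : finType) (p : U * V * W * X -> R)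
    (s : (U * V * W * X) * (Y * Z)) : R :=
  p s.1 * q s.1.2 s.2.1 s.2.2.

Section RVs.
Variables U V W : finType.
Definition rvU (s : (U * V * W * X) * (Y * Z)) : U := s.1.1.1.1.
Definition rvV (s : (U * V * W * X) * (Y * Z)) : V := s.1.1.1.2.
Definition rvW (s : (U * V * W * X) * (Y * Z)) : W := s.1.1.2.
Definition rvY (s : (U * V * W * X) * (Y * Z)) : Y := s.2.1.
Definition rvZ (s : (U * V * W * X) * (Y * Z)) : Z := s.2.2.
End RVs.

Definition marton_obj (U V W : finType) (p : U * V * W * X -> R) : R :=
  let P := joint p in
  Num.min (mi P (@rvW U V W) (@rvY U V W)) (mi P (@rvW U V W) (@rvZ U V W))
  + cmi P (@rvU U V W) (@rvY U V W) (@rvW U V W)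
  + cmi P (@rvV U V W) (@rvZ U V W) (@rvW U V W)
  - cmi P (@rvU U V W) (@rvV U V W) (@rvW U V W).

Definition tlam_obj (lam : R) (U V W : finType) (p : U * V * W * X -> R) : R :=
  let P := joint p in
  lam * mi P (@rvW U V W) (@rvY U V W) + (1 - lam) * mi P (@rvW U V W) (@rvZ U V W)
  + cmi P (@rvU U V W) (@rvY U V W) (@rvW U V W)
  + cmi P (@rvV U V W) (@rvZ U V W) (@rvW U V W)
  - cmi P (@rvU U V W) (@rvV U V W) (@rvW U V W).

Definition R_sum : \bar R :=
  ereal_sup (EFin @` (fun r : R => exists (U V W : finType) (p : U * V * W * X -> R),
        is_pmf p /\ r = marton_obj p))%classic.

Definition T_lam (lam : R) : \bar R :=
  ereal_sup (EFin @` (fun r : R => exists (U V W : finType) (p : U * V * W * X -> R),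
        is_pmf p /\ r = tlam_obj lam p))%classic.
End Info.

(* Main.v *)
Require Import Defs.
From HB Require Import structures.
From mathcomp Require Import all_boot all_order all_algebra.
From mathcomp Require Import classical_sets reals ereal exp.
From mathcomp Require Import ring lra.
Import Order.TTheory GRing.Theory Num.Theory.
Local Open Scope ring_scope.
Set Implicit Arguments. Unset Strict Implicit. Unset Printing Implicit Defensive.

Section Gen.
Variable R : realType.

Lemma sum_two_inj (T T1 T2 : finType) (e1 : T1 -> T) (e2 : T2 -> T) (H : T -> R) :
  injective e1 -> injective e2 -> (forall a b, e1 a != e2 b) ->
  (forall t, t \notin codom e1 -> t \notin codom e2 -> H t = 0) ->
  \sum_t H t = \sum_a H (e1 a) + \sum_b H (e2 b).
Proof.
move=> i1 i2 d hz.
rewrite (bigID (mem (codom e1))) /= (bigID (mem (codom e2)) (fun t => t \notin codom e1)) /=.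
rewrite [X in _ + (_ + X)]big1 ?addr0; last by move=> t /andP[]; apply: hz.
have cE : forall (TT : finType) (e : TT -> T), injective e ->
    \sum_(t in codom e) H t = \sum_a H (e a).
  move=> TT e ie; rewrite -big_uniq /=; last first.
    by rewrite /codom /image_mem map_inj_uniq // enum_uniq.
  by rewrite /codom /image_mem big_map big_enum.
rewrite cE //; congr (_ + _); rewrite -(cE _ e2) //; apply: eq_bigl => t.
case: (boolP (t \in codom e2)) => [/codomP[b ->]|]; rewrite ?andbF ?andbT //.
by apply/negP => /codomP[a /eqP]; rewrite eq_sym (negbTE (d a b)).
Qed.

Lemma margE (S A : finType) (P : S -> R) (f : S -> A) t :
  marg P f t = \sum_s P s * (f s == t)%:R.
Proof.
by rewrite /marg big_mkcond; apply: eq_bigr => s _; case: eqP; rewrite ?mulr1 ?mulr0.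
Qed.

Lemma sum_margE (S T : finType) (Q : S -> R) (f : S -> T) (G : T -> R) :
  \sum_t marg Q f t * G t = \sum_s Q s * G (f s).
Proof.
under eq_bigr do rewrite margE big_distrl.
rewrite exchange_big; apply: eq_bigr => s _ /=.
rewrite (bigD1 (f s)) //= eqxx mulr1 big1 ?addr0 // => t.
by rewrite eq_sym => /negbTE ->; rewrite mulr0 mul0r.
Qed.

Lemma cmiE (S A B C : finType) (Q : S -> R) fa fb fc :
  @cmi R S A B C Q fa fb fc = \sum_s Q s * ln (
    marg Q (fun s => (fa s, fb s, fc s)) (fa s, fb s, fc s) * marg Q fc (fc s) /
    (marg Q (fun s => (fa s, fc s)) (fa s, fc s) * marg Q (fun s => (fb s, fc s)) (fb s, fc s))).
Proof. by rewrite /cmi sum_margE. Qed.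

Lemma marg_ge (S A : finType) (Q : S -> R) (f : S -> A) s :
  (forall s, 0 <= Q s) -> Q s <= marg Q f (f s).
Proof.
move=> Q0; rewrite /marg (bigD1 s) //= lerDl sumr_ge0 // => *; exact: Q0.
Qed.

Lemma marg_sum (S A : finType) (Q : S -> R) (f : S -> A) :
  \sum_t marg Q f t = \sum_s Q s.
Proof.
by have := sum_margE Q f (fun _ => 1); under eq_bigr do rewrite mulr1;
  move=> ->; under eq_bigr do rewrite mulr1.
Qed.

Lemma ratio_scale (a x y z w : R) : a != 0 ->
  a * x * (a * y) / (a * z * (a * w)) = x * y / (z * w).
Proof.
move=> a0; have [zw0|zw0] := eqVneq (z * w) 0.
  by rewrite zw0 mulrACA [X in _ / X]mulrACA zw0 !mulr0 !invr0 !mulr0.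
have z0 : z != 0 by apply: contra zw0 => /eqP ->; rewrite mul0r.
have w0 : w != 0 by apply: contra zw0 => /eqP ->; rewrite mulr0.
by field; rewrite a0 z0 w0.
Qed.

End Gen.

Section Mix.
Variable R : realType.

Definition cmiG (S A B C : finType) (Q : S -> R) (fa : S -> A) (fb : S -> B) (fc : S -> C) s :=
  ln (marg Q (fun s => (fa s, fb s, fc s)) (fa s, fb s, fc s) * marg Q fc (fc s) /
    (marg Q (fun s => (fa s, fc s)) (fa s, fc s) * marg Q (fun s => (fb s, fc s)) (fb s, fc s))).

Lemma cmiE' (S A B C : finType) (Q : S -> R) fa fb fc :
  @cmi R S A B C Q fa fb fc = \sum_s Q s * cmiG Q fa fb fc s.
Proof. exact: cmiE. Qed.

Lemma kl_ge0 (S1 T : finType) (Q : S1 -> R) (f : S1 -> T) (py : T -> R) (c : R) :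
  (forall s, 0 <= Q s) -> \sum_s Q s = 1 -> 0 < c ->
  (forall t, c * marg Q f t <= py t) -> \sum_t py t = 1 ->
  0 <= \sum_s Q s * ln (marg Q f (f s) / py (f s)).
Proof.
move=> Q0 Q1 c0 hpy py1.
rewrite -(sum_margE Q f (fun t => ln (marg Q f t / py t))).
apply: (@le_trans _ _ (\sum_t (marg Q f t - py t))).
  by rewrite sumrB marg_sum Q1 py1 subrr.
apply: ler_sum => t _.
have m0 : 0 <= marg Q f t by apply: sumr_ge0 => s _; exact: Q0.
have py0 : c * marg Q f t <= py t := hpy t.
move: m0 py0; set m := marg Q f t; set y := py t => m0 py0.
have [me|mpos] := eqVneq m 0.
  by rewrite me mul0r sub0r oppr_le0; move: py0; rewrite me mulr0.
have mp : 0 < m by rewrite lt_def mpos m0.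
have yp : 0 < y by apply: lt_le_trans py0; rewrite mulr_gt0.
have hl : ln (y / m) <= y / m - 1.
  have := @le_ln1Dx R (y / m - 1); rewrite addrCA subrr addr0; apply.
  by have := divr_gt0 yp mp; lra.
have -> : ln (m / y) = - ln (y / m).
  by rewrite -lnV ?posrE ?divr_gt0 // invf_div.
have : m * (1 - y / m) <= m * - ln (y / m).
  by rewrite ler_wpM2l // lerNr opprB.
by rewrite mulrBr mulr1 mulrCA divff ?mulr1 // gt_eqF.
Qed.

Variables (S S1 S2 : finType) (P : S -> R) (P1 : S1 -> R) (P2 : S2 -> R)
  (E1 : S1 -> S) (E2 : S2 -> S) (a b : R).
Hypothesis mixP : forall g : S -> R,
  \sum_s P s * g s = a * \sum_s P1 s * g (E1 s) + b * \sum_s P2 s * g (E2 s).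

Lemma sumP : \sum_s P s = a * \sum_s P1 s + b * \sum_s P2 s.
Proof.
have := mixP (fun _ => 1); under eq_bigr do rewrite mulr1.
by move=> ->; congr (_ * _ + _ * _); apply: eq_bigr => s _; rewrite mulr1.
Qed.

Lemma marg_mix1 (T T1 : finType) (f : S -> T) (f1 : S1 -> T1) (k1 : T1 -> T) :
  (forall s, f (E1 s) = k1 (f1 s)) -> injective k1 ->
  (forall s t, f (E2 s) != k1 t) -> forall t, marg P f (k1 t) = a * marg P1 f1 t.
Proof.
move=> h1 ik hd t; rewrite !margE mixP [X in _ + b * X]big1 ?mulr0 ?addr0; last first.
  by move=> s _; rewrite (negbTE (hd s t)) mulr0.
by congr (_ * _); apply: eq_bigr => s _; rewrite h1 (inj_eq ik).
Qed.

Lemma cmi_side (A B C A1 B1 C1 : finType) (fa : S -> A) (fb : S -> B) (fc : S -> C)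
  (fa1 : S1 -> A1) (fb1 : S1 -> B1) (fc1 : S1 -> C1)
  (ja : A1 -> A) (jb : B1 -> B) (jc : C1 -> C) :
  injective ja -> injective jb -> injective jc ->
  (forall s, fa (E1 s) = ja (fa1 s)) -> (forall s, fb (E1 s) = jb (fb1 s)) ->
  (forall s, fc (E1 s) = jc (fc1 s)) -> (forall s c, fc (E2 s) != jc c) ->
  a != 0 -> forall s, cmiG P fa fb fc (E1 s) = cmiG P1 fa1 fb1 fc1 s.
Proof.
move=> ia ib ic ha hb hc hd a0 s; rewrite /cmiG ha hb hc.
have -> : marg P (fun s => (fa s, fb s, fc s)) (ja (fa1 s), jb (fb1 s), jc (fc1 s)) =
   a * marg P1 (fun s => (fa1 s, fb1 s, fc1 s)) (fa1 s, fb1 s, fc1 s).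
  apply: (marg_mix1 (k1 := fun t => (ja t.1.1, jb t.1.2, jc t.2))
   (f1 := fun s => (fa1 s, fb1 s, fc1 s)) _ _ _ (fa1 s, fb1 s, fc1 s)).
  - by move=> s'; rewrite ha hb hc.
  - by move=> [[x y] z] [[x' y'] z'] /= [/ia -> /ib -> /ic ->].
  - by move=> s' t; rewrite xpair_eqE (negbTE (hd s' _)) andbF.
rewrite (marg_mix1 (k1 := jc) (f1 := fc1)) //.
have -> : marg P (fun s => (fa s, fc s)) (ja (fa1 s), jc (fc1 s)) =
   a * marg P1 (fun s => (fa1 s, fc1 s)) (fa1 s, fc1 s).
  apply: (marg_mix1 (k1 := fun t => (ja t.1, jc t.2))
   (f1 := fun s => (fa1 s, fc1 s)) _ _ _ (fa1 s, fc1 s)).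
  - by move=> s'; rewrite ha hc.
  - by move=> [x z] [x' z'] /= [/ia -> /ic ->].
  - by move=> s' t; rewrite xpair_eqE (negbTE (hd s' _)) andbF.
have -> : marg P (fun s => (fb s, fc s)) (jb (fb1 s), jc (fc1 s)) =
   a * marg P1 (fun s => (fb1 s, fc1 s)) (fb1 s, fc1 s).
  apply: (marg_mix1 (k1 := fun t => (jb t.1, jc t.2))
   (f1 := fun s => (fb1 s, fc1 s)) _ _ _ (fb1 s, fc1 s)).
  - by move=> s'; rewrite hb hc.
  - by move=> [x z] [x' z'] /= [/ib -> /ic ->].
  - by move=> s' t; rewrite xpair_eqE (negbTE (hd s' _)) andbF.
by rewrite ratio_scale.
Qed.

Lemma mi_side (W W1 Yt : finType) (fw : S -> W) (fy : S -> Yt) (fw1 : S1 -> W1)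
  (fy1 : S1 -> Yt) (fy2 : S2 -> Yt) (kw : W1 -> W) :
  injective kw -> (forall s, fw (E1 s) = kw (fw1 s)) -> (forall s c, fw (E2 s) != kw c) ->
  (forall s, fy (E1 s) = fy1 s) -> (forall s, fy (E2 s) = fy2 s) ->
  (forall s, 0 <= P1 s) -> (forall s, 0 <= P2 s) -> \sum_s P1 s = 1 -> \sum_s P2 s = 1 ->
  0 < a -> 0 <= b -> a + b = 1 ->
  \sum_s P1 s * cmiG P1 fw1 fy1 (fun _ => tt) s <=
  \sum_s P1 s * cmiG P fw fy (fun _ => tt) (E1 s).
Proof.
move=> ik hw1 hw2 hy1 hy2 P1ge P2ge P1s P2s a0 b0 ab.
pose py := fun t => marg P (fun s => (fy s, tt)) t.
have tot : marg P (fun _ => tt) tt = 1.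
  by rewrite /marg (eq_bigl xpredT) // sumP P1s P2s !mulr1.
have tot1 : marg P1 (fun _ => tt) tt = 1 by rewrite /marg (eq_bigl xpredT).
have hpy : forall t, a * marg P1 (fun s => (fy1 s, tt)) t <= py t.
  move=> t; rewrite /py !margE mixP.
  have -> : \sum_s P1 s * ((fy (E1 s), tt) == t)%:R = \sum_s P1 s * ((fy1 s, tt) == t)%:R.
    by apply: eq_bigr => s _; rewrite hy1.
  by rewrite lerDl mulr_ge0 // sumr_ge0 // => s _; rewrite mulr_ge0.
have py1 : \sum_t py t = 1 by rewrite /py marg_sum sumP P1s P2s !mulr1.
apply: (@le_trans _ _ (\sum_s P1 s * cmiG P1 fw1 fy1 (fun _ => tt) s +
   \sum_s P1 s * ln (marg P1 (fun s => (fy1 s, tt)) (fy1 s, tt) / py (fy1 s, tt)))).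
  rewrite lerDl.
  exact: (kl_ge0 (f := fun s => (fy1 s, tt)) P1ge P1s a0 hpy py1).
rewrite -big_split /= le_eqVlt; apply/orP; left; apply/eqP; apply: eq_bigr => s _.
rewrite -mulrDr; have [->|P1n] := eqVneq (P1 s) 0; first by rewrite !mul0r.
have P1p : 0 < P1 s by rewrite lt_def P1n P1ge.
congr (_ * _); rewrite /cmiG hw1 hy1 tot tot1.
have -> : marg P (fun s => (fw s, fy s, tt)) (kw (fw1 s), fy1 s, tt) =
   a * marg P1 (fun s => (fw1 s, fy1 s, tt)) (fw1 s, fy1 s, tt).
  apply: (marg_mix1 (k1 := fun t => (kw t.1.1, t.1.2, t.2))
   (f1 := fun s => (fw1 s, fy1 s, tt)) _ _ _ (fw1 s, fy1 s, tt)).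
  - by move=> s'; rewrite hw1 hy1.
  - by move=> [[x y] z] [[x' y'] z'] /= [/ik -> -> ->].
  - by move=> s' t; rewrite !xpair_eqE (negbTE (hw2 s' _)).
have -> : marg P (fun s => (fw s, tt)) (kw (fw1 s), tt) =
   a * marg P1 (fun s => (fw1 s, tt)) (fw1 s, tt).
  apply: (marg_mix1 (k1 := fun t => (kw t.1, t.2))
   (f1 := fun s => (fw1 s, tt)) _ _ _ (fw1 s, tt)).
  - by move=> s'; rewrite hw1.
  - by move=> [x z] [x' z'] /= [/ik -> ->].
  - by move=> s' t; rewrite !xpair_eqE (negbTE (hw2 s' _)).
have m1p : 0 < marg P1 (fun s => (fw1 s, fy1 s, tt)) (fw1 s, fy1 s, tt) :=
  lt_le_trans P1p (marg_ge _ _ P1ge).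
have m2p : 0 < marg P1 (fun s => (fw1 s, tt)) (fw1 s, tt) :=
  lt_le_trans P1p (marg_ge _ _ P1ge).
have m3p : 0 < marg P1 (fun s => (fy1 s, tt)) (fy1 s, tt) :=
  lt_le_trans P1p (marg_ge _ _ P1ge).
have pyp : 0 < py (fy1 s, tt) := lt_le_trans (mulr_gt0 a0 m3p) (hpy _).
rewrite -/(py (fy1 s, tt)).
rewrite -lnM ?posrE; last 2 first.
- by rewrite divr_gt0 ?mulr_gt0.
- by rewrite divr_gt0.
congr ln.
by field; rewrite !gt_eqF.
Qed.

End Mix.

Section MixComb.
Variable R : realType.
Variables (S S1 S2 : finType) (P : S -> R) (P1 : S1 -> R) (P2 : S2 -> R)
  (E1 : S1 -> S) (E2 : S2 -> S) (a b : R).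
Hypothesis mixP : forall g : S -> R,
  \sum_s P s * g s = a * \sum_s P1 s * g (E1 s) + b * \sum_s P2 s * g (E2 s).

Let mixP' : forall g : S -> R,
  \sum_s P s * g s = b * \sum_s P2 s * g (E2 s) + a * \sum_s P1 s * g (E1 s).
Proof. by move=> g; rewrite mixP addrC. Qed.

Lemma cmi_mix (A B C A1 B1 C1 A2 B2 C2 : finType) (fa : S -> A) (fb : S -> B) (fc : S -> C)
  (fa1 : S1 -> A1) (fb1 : S1 -> B1) (fc1 : S1 -> C1)
  (fa2 : S2 -> A2) (fb2 : S2 -> B2) (fc2 : S2 -> C2)
  (ja1 : A1 -> A) (jb1 : B1 -> B) (jc1 : C1 -> C)
  (ja2 : A2 -> A) (jb2 : B2 -> B) (jc2 : C2 -> C) :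
  injective ja1 -> injective jb1 -> injective jc1 ->
  injective ja2 -> injective jb2 -> injective jc2 ->
  (forall s, fa (E1 s) = ja1 (fa1 s)) -> (forall s, fb (E1 s) = jb1 (fb1 s)) ->
  (forall s, fc (E1 s) = jc1 (fc1 s)) ->
  (forall s, fa (E2 s) = ja2 (fa2 s)) -> (forall s, fb (E2 s) = jb2 (fb2 s)) ->
  (forall s, fc (E2 s) = jc2 (fc2 s)) ->
  (forall c1 c2, jc1 c1 != jc2 c2) ->
  a != 0 -> b != 0 ->
  cmi P fa fb fc = a * cmi P1 fa1 fb1 fc1 + b * cmi P2 fa2 fb2 fc2.
Proof.
move=> ia1 ib1 ic1 ia2 ib2 ic2 ha1 hb1 hc1 ha2 hb2 hc2 d a0 b0.
rewrite !cmiE' mixP; congr (a * _ + b * _); apply: eq_bigr => s _.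
  rewrite (cmi_side mixP ia1 ib1 ic1 ha1 hb1 hc1) // => s' c.
  by rewrite hc2 eq_sym.
rewrite (cmi_side mixP' ia2 ib2 ic2 ha2 hb2 hc2) // => s' c.
by rewrite hc1.
Qed.

Lemma mi_mix (W W1 W2 Yt : finType) (fw : S -> W) (fy : S -> Yt) (fw1 : S1 -> W1)
  (fy1 : S1 -> Yt) (fw2 : S2 -> W2) (fy2 : S2 -> Yt) (kw1 : W1 -> W) (kw2 : W2 -> W) :
  injective kw1 -> injective kw2 -> (forall c1 c2, kw1 c1 != kw2 c2) ->
  (forall s, fw (E1 s) = kw1 (fw1 s)) -> (forall s, fw (E2 s) = kw2 (fw2 s)) ->
  (forall s, fy (E1 s) = fy1 s) -> (forall s, fy (E2 s) = fy2 s) ->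
  (forall s, 0 <= P1 s) -> (forall s, 0 <= P2 s) -> \sum_s P1 s = 1 -> \sum_s P2 s = 1 ->
  0 < a -> 0 < b -> a + b = 1 ->
  a * mi P1 fw1 fy1 + b * mi P2 fw2 fy2 <= mi P fw fy.
Proof.
move=> i1 i2 d hw1 hw2 hy1 hy2 P1ge P2ge P1s P2s a0 b0 ab.
rewrite /mi !cmiE' mixP; apply: lerD; rewrite ler_pM2l //.
  apply: (mi_side mixP i1 hw1 _ hy1 hy2 P1ge P2ge P1s P2s a0 (ltW b0) ab).
  by move=> s c; rewrite hw2 eq_sym.
apply: (mi_side mixP' i2 hw2 _ hy2 hy1 P2ge P1ge P2s P1s b0 (ltW a0) _); last by rewrite addrC.
by move=> s c; rewrite hw1.
Qed.

End MixComb.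

Section Concrete.
Variable R : realType.
Variables (X Y Z : finType) (q : X -> Y -> Z -> R).
Hypothesis hq : is_bc_channel q.

Definition Cc (U V W : finType) (p : U * V * W * X -> R) : R :=
  let P := joint q p in
  cmi P (@rvU X Y Z U V W) (@rvY X Y Z U V W) (@rvW X Y Z U V W)
  + cmi P (@rvV X Y Z U V W) (@rvZ X Y Z U V W) (@rvW X Y Z U V W)
  - cmi P (@rvU X Y Z U V W) (@rvV X Y Z U V W) (@rvW X Y Z U V W).
Definition aa (U V W : finType) (p : U * V * W * X -> R) : R :=
  mi (joint q p) (@rvW X Y Z U V W) (@rvY X Y Z U V W) + Cc p.
Definition bb (U V W : finType) (p : U * V * W * X -> R) : R :=
  mi (joint q p) (@rvW X Y Z U V W) (@rvZ X Y Z U V W) + Cc p.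

Lemma martonE (U V W : finType) (p : U * V * W * X -> R) :
  marton_obj q p = Num.min (aa p) (bb p).
Proof. by rewrite /marton_obj /aa /bb /Cc -addr_minl; ring. Qed.

Lemma tlamE lam (U V W : finType) (p : U * V * W * X -> R) :
  tlam_obj q lam p = lam * aa p + (1 - lam) * bb p.
Proof. by rewrite /tlam_obj /aa /bb /Cc; ring. Qed.

Lemma sum_pair (I J : finType) (F : I * J -> R) :
  \sum_(p : I * J) F p = \sum_i \sum_j F (i, j).
Proof. by rewrite pair_bigA; apply: eq_bigr => -[]. Qed.

Lemma joint_pmf (U V W : finType) (p : U * V * W * X -> R) : is_pmf p ->
  (forall s, 0 <= joint q p s) /\ \sum_s joint q p s = 1.
Proof.
case: hq => q0 q1 [p0 p1]; split.
  by move=> s; rewrite /joint mulr_ge0.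
rewrite sum_pair -p1; apply: eq_bigr => x _.
rewrite /joint /= -big_distrr /= sum_pair q1 mulr1 //.
Qed.

Section Two.
Variables (U1 V1 W1 U2 V2 W2 : finType).
Variables (p1 : U1 * V1 * W1 * X -> R) (p2 : U2 * V2 * W2 * X -> R) (al : R).
Hypotheses (hp1 : is_pmf p1) (hp2 : is_pmf p2) (al0 : 0 < al) (al1 : al < 1).

Let U' := (U1 + U2)%type.
Let V' := (V1 + V2)%type.
Let W' := (W1 + W2)%type.

Definition e1 (x : U1 * V1 * W1 * X) : U' * V' * W' * X :=
  (inl x.1.1.1, inl x.1.1.2, inl x.1.2, x.2).
Definition e2 (x : U2 * V2 * W2 * X) : U' * V' * W' * X :=
  (inr x.1.1.1, inr x.1.1.2, inr x.1.2, x.2).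
Definition mixp (x : U' * V' * W' * X) : R :=
  match x with
  | (inl u, inl v, inl w, x0) => al * p1 (u, v, w, x0)
  | (inr u, inr v, inr w, x0) => (1 - al) * p2 (u, v, w, x0)
  | _ => 0
  end.
Definition E1 (s : U1 * V1 * W1 * X * (Y * Z)) := (e1 s.1, s.2).
Definition E2 (s : U2 * V2 * W2 * X * (Y * Z)) := (e2 s.1, s.2).

Lemma mixP_joint (g : U' * V' * W' * X * (Y * Z) -> R) :
  \sum_s joint q mixp s * g s =
  al * \sum_s joint q p1 s * g (E1 s) + (1 - al) * \sum_s joint q p2 s * g (E2 s).
Proof.
rewrite (sum_two_inj (e1 := E1) (e2 := E2)).
- rewrite !big_distrr; congr (_ + _); apply: eq_bigr => -[[[[u v] w] x] yz] _;
  by rewrite /joint /= !mulrA.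
- by move=> [[[[u v] w] x] yz] [[[[u' v'] w'] x'] yz'] [-> -> -> -> ->].
- by move=> [[[[u v] w] x] yz] [[[[u' v'] w'] x'] yz'] [-> -> -> -> ->].
- by move=> s s'; apply/eqP => -[].
move=> [[[[u v] w] x] yz] h1 h2.
case: u v w h1 h2 => u [] v [] w h1 h2; rewrite /joint /= ?mul0r //.
  by move: h1; rewrite (_ : (_, _) = E1 (u, v, w, x, yz)) // codom_f.
by move: h2; rewrite (_ : (_, _) = E2 (u, v, w, x, yz)) // codom_f.
Qed.

Lemma mixp_pmf : is_pmf mixp.
Proof.
case: hp1 => p10 p11; case: hp2 => p20 p21; split.
  move=> [[[[u|u] [v|v]] [w|w]] x] /=; rewrite ?lexx // mulr_ge0 //; first exact: ltW.
  by rewrite subr_ge0 ltW.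
rewrite (sum_two_inj (e1 := e1) (e2 := e2)).
- transitivity (al * \sum_x p1 x + (1 - al) * \sum_x p2 x); last first.
    by rewrite p11 p21; ring.
  rewrite !big_distrr; congr (_ + _); apply: eq_bigr => -[[[u v] w] x] _ //.
- by move=> [[[u v] w] x] [[[u' v'] w'] x'] [-> -> -> ->].
- by move=> [[[u v] w] x] [[[u' v'] w'] x'] [-> -> -> ->].
- by move=> s s'; apply/eqP => -[].
move=> [[[u v] w] x] h1 h2.
case: u v w h1 h2 => u [] v [] w h1 h2 //.
  by move: h1; rewrite (_ : (_, _) = e1 (u, v, w, x)) // codom_f.
by move: h2; rewrite (_ : (_, _) = e2 (u, v, w, x)) // codom_f.
Qed.


Lemma inl_inj' (A B : Type) : injective (@inl A B). Proof. by move=> ? ? []. Qed.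
Lemma inr_inj' (A B : Type) : injective (@inr A B). Proof. by move=> ? ? []. Qed.

Lemma mix_ab : al * aa p1 + (1 - al) * aa p2 <= aa mixp /\
               al * bb p1 + (1 - al) * bb p2 <= bb mixp.
Proof.
have a0 : al != 0 by rewrite gt_eqF.
have b0 : 1 - al != 0 by rewrite gt_eqF // subr_gt0.
have bp : 0 < 1 - al by rewrite subr_gt0.
have ab : al + (1 - al) = 1 by ring.
have [P1ge P1s] := joint_pmf hp1.
have [P2ge P2s] := joint_pmf hp2.
have il := @inl_inj'; have ir := @inr_inj'.
have iid : forall T : Type, injective (@id T) by move=> T ? ?.
have hC : Cc mixp = al * Cc p1 + (1 - al) * Cc p2.
  rewrite /Cc.
  rewrite (cmi_mix mixP_joint (ja1 := inl) (jb1 := id) (jc1 := inl)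
    (ja2 := inr) (jb2 := id) (jc2 := inr)
    (fa1 := @rvU X Y Z _ _ _) (fb1 := @rvY X Y Z _ _ _) (fc1 := @rvW X Y Z _ _ _) (fa2 := @rvU X Y Z _ _ _) (fb2 := @rvY X Y Z _ _ _) (fc2 := @rvW X Y Z _ _ _) (il _ _) (iid _) (il _ _) (ir _ _) (iid _) (ir _ _)
    (fun _ => erefl) (fun _ => erefl) (fun _ => erefl) (fun _ => erefl) (fun _ => erefl)
    (fun _ => erefl) (fun _ _ => isT) a0 b0).
  rewrite (cmi_mix mixP_joint (ja1 := inl) (jb1 := id) (jc1 := inl)
    (ja2 := inr) (jb2 := id) (jc2 := inr)
    (fa1 := @rvV X Y Z _ _ _) (fb1 := @rvZ X Y Z _ _ _) (fc1 := @rvW X Y Z _ _ _) (fa2 := @rvV X Y Z _ _ _) (fb2 := @rvZ X Y Z _ _ _) (fc2 := @rvW X Y Z _ _ _) (il _ _) (iid _) (il _ _) (ir _ _) (iid _) (ir _ _)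
    (fun _ => erefl) (fun _ => erefl) (fun _ => erefl) (fun _ => erefl) (fun _ => erefl)
    (fun _ => erefl) (fun _ _ => isT) a0 b0).
  rewrite (cmi_mix mixP_joint (ja1 := inl) (jb1 := inl) (jc1 := inl)
    (ja2 := inr) (jb2 := inr) (jc2 := inr)
    (fa1 := @rvU X Y Z _ _ _) (fb1 := @rvV X Y Z _ _ _) (fc1 := @rvW X Y Z _ _ _) (fa2 := @rvU X Y Z _ _ _) (fb2 := @rvV X Y Z _ _ _) (fc2 := @rvW X Y Z _ _ _) (il _ _) (il _ _) (il _ _) (ir _ _) (ir _ _) (ir _ _)
    (fun _ => erefl) (fun _ => erefl) (fun _ => erefl) (fun _ => erefl) (fun _ => erefl)
    (fun _ => erefl) (fun _ _ => isT) a0 b0).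
  by ring.
rewrite /aa /bb hC; split.
  have := mi_mix mixP_joint (fw := @rvW X Y Z _ _ _) (fy := @rvY X Y Z _ _ _) (fw1 := @rvW X Y Z _ _ _) (fy1 := @rvY X Y Z _ _ _) (fw2 := @rvW X Y Z _ _ _) (fy2 := @rvY X Y Z _ _ _)
    (kw1 := inl) (kw2 := inr) (il _ _) (ir _ _) (fun _ _ => isT) (fun _ => erefl)
    (fun _ => erefl) (fun _ => erefl) (fun _ => erefl) P1ge P2ge P1s P2s al0 bp ab.
  move=> h; apply: le_trans (lerD h (lexx _)); rewrite le_eqVlt; apply/orP; left; apply/eqP; ring.
have := mi_mix mixP_joint (fw := @rvW X Y Z _ _ _) (fy := @rvZ X Y Z _ _ _) (fw1 := @rvW X Y Z _ _ _) (fy1 := @rvZ X Y Z _ _ _) (fw2 := @rvW X Y Z _ _ _) (fy2 := @rvZ X Y Z _ _ _)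
    (kw1 := inl) (kw2 := inr) (il _ _) (ir _ _) (fun _ _ => isT) (fun _ => erefl)
    (fun _ => erefl) (fun _ => erefl) (fun _ => erefl) P1ge P2ge P1s P2s al0 bp ab.
move=> h; apply: le_trans (lerD h (lexx _)); rewrite le_eqVlt; apply/orP; left; apply/eqP; ring.
Qed.

End Two.
End Concrete.

Section Main.
Variable R : realType.
Variables (X Y Z : finType) (q : X -> Y -> Z -> R).
Hypothesis hq : is_bc_channel q.
Local Open Scope classical_set_scope.

Lemma mixture (U1 V1 W1 U2 V2 W2 : finType) (p1 : U1 * V1 * W1 * X -> R)
  (p2 : U2 * V2 * W2 * X -> R) (al : R) :
  is_pmf p1 -> is_pmf p2 -> 0 < al -> al < 1 ->
  exists (U V W : finType) (p : U * V * W * X -> R), is_pmf p /\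
    al * aa q p1 + (1 - al) * aa q p2 <= aa q p /\
    al * bb q p1 + (1 - al) * bb q p2 <= bb q p.
Proof.
move=> h1 h2 a0 a1.
exists (U1 + U2)%type, (V1 + V2)%type, (W1 + W2)%type, (mixp p1 p2 al); split.
  exact: mixp_pmf.
exact: mix_ab.
Qed.

Lemma min_le_conv (lam a b : R) : 0 <= lam <= 1 ->
  Num.min a b <= lam * a + (1 - lam) * b.
Proof.
move=> /andP[l0 l1].
have ha : Num.min a b <= a by rewrite ge_min lexx.
have hb : Num.min a b <= b by rewrite ge_min lexx orbT.
nra.
Qed.

Lemma part2 (lam : R) : 0 <= lam <= 1 -> (R_sum q <= T_lam q lam)%E.
Proof.
move=> hl; apply: ge_ereal_sup => _ [r [U [V [W [p [hp ->]]]]] <-].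
apply: le_ereal_sup_tmp; exists (tlam_obj q lam p)%:E.
  by exists (tlam_obj q lam p) => //; exists U, V, W, p.
by rewrite lee_fin martonE tlamE min_le_conv.
Qed.

Lemma aux_contra (k r A B : R) : 0 < k -> k + r <= A -> k + r <= B ->
  A - r <= 0 \/ B - r <= 0 -> False.
Proof. by move=> ? ? ? []; lra. Qed.

Lemma min_sub (a b r : R) : Num.min a b <= r -> a - r <= 0 \/ b - r <= 0.
Proof. by rewrite ge_min => /orP[h|h]; [left|right]; rewrite subr_le0. Qed.

Lemma keyK : exists2 lam : R, 0 <= lam <= 1 &
  forall (U V W : finType) (p : U * V * W * X -> R), is_pmf p ->
    ((tlam_obj q lam p)%:E <= R_sum q)%E.
Proof.
case E: (R_sum q) => [r| |]; last 2 first.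
- by exists 0; [rewrite lexx ler01 | move=> *; rewrite leey].
- exists 0; first by rewrite lexx ler01.
  move=> U V W p hp; exfalso.
  have : ((marton_obj q p)%:E <= R_sum q)%E.
    apply: ereal_sup_ubound; exists (marton_obj q p) => //; by exists U, V, W, p.
  by rewrite E leeNy_eq.
have hm : forall (U V W : finType) (p : U * V * W * X -> R), is_pmf p ->
    aa q p - r <= 0 \/ bb q p - r <= 0.
  move=> U V W p hp; apply: min_sub; rewrite -martonE -lee_fin -E.
  apply: ereal_sup_ubound; exists (marton_obj q p) => //; by exists U, V, W, p.
pose L := [set l : R | l = 0 \/ exists (U V W : finType) (p : U * V * W * X -> R),
   is_pmf p /\ aa q p - r < bb q p - r /\
   l = (bb q p - r) / ((bb q p - r) - (aa q p - r))].
have L1 : forall l, L l -> l <= 1.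
  move=> l [->|[U [V [W [p [hp [hxy ->]]]]]]]; first exact: ler01.
  have hx : aa q p - r <= 0 by case: (hm _ _ _ _ hp) => h //; lra.
  by rewrite ler_pdivrMr ?subr_gt0 // mul1r; lra.
have hL : has_sup L by split; [exists 0; left | exists 1 => l /L1].
pose lam := sup L.
have lamub : forall l, L l -> l <= lam := sup_upper_bound hL.
have lam0 : 0 <= lam by apply: lamub; left.
have lam1 : lam <= 1 by apply: ge_sup; [exists 0; left | exact: L1].
exists lam; first by rewrite lam0 lam1.
move=> U V W p hp; rewrite lee_fin tlamE.
pose x := aa q p - r; pose y := bb q p - r.
have ex : aa q p = x + r by rewrite /x subrK.
have ey : bb q p = y + r by rewrite /y subrK.
rewrite ex ey.
suff : lam * x + (1 - lam) * y <= 0 by move=> h; nra.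
have hxy := hm _ _ _ _ hp; rewrite -/x -/y in hxy.
case: (ltgtP x y) => cxy.
- have hl : y / (y - x) <= lam.
    by apply: lamub; right; exists U, V, W, p.
  have dpos : 0 < y - x by rewrite subr_gt0.
  have e : y / (y - x) * (y - x) = y by rewrite divfK // gt_eqF.
  have := ler_wpM2r (ltW dpos) hl; rewrite e => h2.
  nra.
- have y0 : y <= 0 by case: hxy => h //; lra.
  have dpos : 0 < x - y by rewrite subr_gt0.
  pose mu := - y / (x - y).
  have emu : mu * (x - y) = - y by rewrite /mu divfK // gt_eqF.
  suff hlm : lam <= mu.
    have := ler_wpM2r (ltW dpos) hlm; rewrite emu => h2; nra.
  apply: ge_sup; first by exists 0; left.
  move=> l [->|[U1 [V1 [W1 [p1 [hp1 [hxy1 ->]]]]]]].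
    by rewrite /mu divr_ge0 // ?oppr_ge0 // ltW.
  pose x1 := aa q p1 - r; pose y1 := bb q p1 - r.
  rewrite -/x1 -/y1 in hxy1 *.
  have ex1 : aa q p1 = x1 + r by rewrite /x1 subrK.
  have ey1 : bb q p1 = y1 + r by rewrite /y1 subrK.
  have hxy1' := hm _ _ _ _ hp1; rewrite -/x1 -/y1 in hxy1'.
  have x10 : x1 <= 0 by case: hxy1' => h //; lra.
  have d1 : 0 < y1 - x1 by rewrite subr_gt0.
  rewrite ler_pdivrMr // /mu mulrAC ler_pdivlMr //.
  have [y10|y10] := lerP y1 0; first by nra.
  have [x0|x0] := lerP x 0; first by nra.
  rewrite leNgt; apply/negP => hc.
  pose D := (x - y) + (y1 - x1).
  have Dp : 0 < D by rewrite /D addr_gt0.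
  pose al := (x - y) / D.
  have al0 : 0 < al by rewrite /al divr_gt0.
  have al1 : al < 1 by rewrite /al ltr_pdivrMr // mul1r /D ltrDl.
  have [U' [V' [W' [p' [hp' [ha hb]]]]]] := mixture hp1 hp al0 al1.
  have K : 0 < (x * y1 - y * x1) / D.
    by rewrite divr_gt0 // subr_gt0; nra.
  have e1 : al * (x1 + r) + (1 - al) * (x + r) = (x * y1 - y * x1) / D + r.
    by rewrite /al /D; field; rewrite gt_eqF.
  have e2 : al * (y1 + r) + (1 - al) * (y + r) = (x * y1 - y * x1) / D + r.
    by rewrite /al /D; field; rewrite gt_eqF.
  rewrite ex1 ex e1 in ha; rewrite ey1 ey e2 in hb.
  exact: (aux_contra K ha hb (hm _ _ _ _ hp')).
- rewrite -cxy; case: hxy => h; rewrite -?cxy in h; nra.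
Qed.

Theorem claim2' : is_bc_channel q ->
  (exists2 lam : R, 0 <= lam <= 1 & R_sum q = T_lam q lam) /\
  (forall lam : R, 0 <= lam <= 1 -> (R_sum q <= T_lam q lam)%E).
Proof.
move=> _; split; last exact: part2.
have [lam hl hK] := keyK; exists lam => //.
apply/le_anti; rewrite part2 //=.
apply: ge_ereal_sup => _ [r [U [V [W [p [hp ->]]]]] <-].
exact: hK.
Qed.

End Main.

Theorem claim2 (R : realType) (X Y Z : finType) (q : X -> Y -> Z -> R) :
  is_bc_channel q ->
  (exists2 lam : R, 0 <= lam <= 1 & R_sum q = T_lam q lam) /\
  (forall lam : R, 0 <= lam <= 1 -> (R_sum q <= T_lam q lam)%E).
Proof. by move=> hq; exact: (claim2' hq hq). Qed.
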